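(* Let $X$ be a bornological coarse space with bornology $\mathcal{B}$, and let $\bar X$ be a Higson-dominated compactification of $X$ with boundary $Y$. Suppose given a neighbourhood $U$ of $Y$ in $\bar X$ with a retraction $r\colon U\to Y$, a proper, bornological and controlled function $s\colon X\to[0,\infty)$, and a point $y_0\in Y$. Define $\psi\colon X\to[0,\infty)\times Y$ by $\psi(x):=(s(x),y_0)$ if $x\notin p^{-1}(U)$ and $\psi(x):=(s(x),r(p(x)))$ if $x\in p^{-1}(U)$. Then $\psi\colon X\to\mathcal{O}(Y)$ is a morphism of bornological coarse spaces.
   Context: A bornological coarse space is a set with a coarse structure and compatible bornology; morphisms are controlled (images of entourages are entourages) and proper (preimages of bounded sets are bounded). Let $\ell^\infty_{\mathcal{B}}(X)$ be the $C^*$-algebra of bounded functions $f$ on $X$ such that for every entourage $U$, $\sup\{|f(x)-f(x')|:(x,x')\in U,\ x,x'\notin B\}\to0$ along bounded $B$, and $\ell^\infty(\mathcal{B})$ the ideal of bounded functions with $\sup_{X\setminus B}|f|\to0$ along bounded $B$. A Higson-dominated compactification is given by a closed unital subalgebra $A$ with $\ell^\infty(\mathcal{B})\subseteq A\subseteq\ell^\infty_{\mathcal{B}}(X)$: $\bar X$ is the Gelfand dual of $A$ (a compact Hausdorff space), the boundary $Y$ is the Gelfand dual of $A/\ell^\infty(\mathcal{B})$ (a closed subspace of $\bar X$), and $p\colon X\to\bar X$ sends $x$ to the character $f\mapsto f(x)$. A function $s\colon X\to[0,\infty)$ is proper if preimages of bounded sets are bounded, bornological if images of bounded sets are bounded,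 and controlled if $\sup_{(x,x')\in W}|s(x)-s(x')|<\infty$ for every entourage $W$. $Y$ carries the maximal coarse structure and bornology and the uniform structure of all neighbourhoods of the diagonal. $\mathcal{O}(Y)$ is $[0,\infty)\times Y$ with the bornology whose bounded sets are those contained in $[0,R]\times Y$ for some $R$, and whose entourages are the subsets $U$ of $([0,\infty)\times Y)^2$ with $\sup_{((t,y),(t',y'))\in U}|t-t'|<\infty$ such that for every neighbourhood $V$ of the diagonal of $Y$ there is $S$ with $(y,y')\in V$ whenever $((t,y),(t',y'))\in U$ and $t,t'\ge S$. *)

(* Defs.v *)
From HB Require Import structures.
From mathcomp Require Import all_boot all_algebra.
From mathcomp Require Import complex.
From mathcomp Require Import all_classical all_reals.
From mathcomp Require Import Rstruct.
Set Implicit Arguments. Unset Strict Implicit. Unset Printing Implicit Defensive.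
Import GRing.Theory Num.Theory.
Local Open Scope classical_set_scope.
Local Open Scope ring_scope.

Notation Rr := Rdefinitions.R.
Definition Cx := (Rdefinitions.R)[i].

Record coarse_structure (X : Type) (E : set (set (X * X))) : Prop := {
  cs_diag : E [set xy | xy.1 = xy.2];
  cs_sub : forall U V, E U -> V `<=` U -> E V;
  cs_union : forall U V, E U -> E V -> E (U `|` V);
  cs_inv : forall U, E U -> E [set xy | U (xy.2, xy.1)];
  cs_comp : forall U V, E U -> E V ->
    E [set xy | exists z, U (xy.1, z) /\ V (z, xy.2)] }.

Record bornology (X : Type) (B : set (set X)) : Prop := {
  bo_cover : forall x, B [set x];
  bo_sub : forall S T, B S -> T `<=` S -> B T;
  bo_union : forall S T, B S -> B T -> B (S `|` T) }.

Definition thickening (X : Type) (U : set (X * X)) (S : set X) : set X :=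
  [set x | exists b, S b /\ U (x, b)].

Record bornological_coarse (X : Type) (E : set (set (X * X))) (B : set (set X))
  : Prop := {
  bc_coarse : coarse_structure E;
  bc_born : bornology B;
  bc_compat : forall U S, E U -> B S -> B (thickening U S) }.

Definition bc_morphism (X Z : Type) (EX : set (set (X * X))) (BX : set (set X))
  (EZ : set (set (Z * Z))) (BZ : set (set Z)) (f : X -> Z) : Prop :=
  (forall U, EX U -> EZ [set zz | exists xx, U xx /\ zz = (f xx.1, f xx.2)]) /\
  (forall S, BZ S -> BX (f @^-1` S)).

Definition bounded_fun (X : Type) (f : X -> Cx) : Prop :=
  exists M : Rr, forall x, `|f x| <= (M%:C)%C.

Definition linfB (X : Type) (E : set (set (X * X))) (B : set (set X))
  : set (X -> Cx) := fun f =>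
  bounded_fun f /\
  forall U, E U -> forall eps : Rr, 0 < eps -> exists S, B S /\
    forall x x', U (x, x') -> ~ S x -> ~ S x' -> `|f x - f x'| <= (eps%:C)%C.

Definition linf0 (X : Type) (B : set (set X)) : set (X -> Cx) := fun f =>
  bounded_fun f /\
  forall eps : Rr, 0 < eps -> exists S, B S /\ forall x, ~ S x -> `|f x| <= (eps%:C)%C.

Record higson_dominated_alg (X : Type) (E : set (set (X * X))) (B : set (set X))
  (A : set (X -> Cx)) : Prop := {
  hd_lower : linf0 B `<=` A;
  hd_upper : A `<=` linfB E B;
  hd_unit : A (fun _ => 1);
  hd_add : forall f g, A f -> A g -> A (fun x => f x + g x);
  hd_mul : forall f g, A f -> A g -> A (fun x => f x * g x);
  hd_scale : forall (c : Cx) f, A f -> A (fun x => c * f x);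
  hd_conj : forall f, A f -> A (fun x => (f x)^*);
  hd_closed : forall f : X -> Cx,
    (forall eps : Rr, 0 < eps -> exists g, A g /\ forall x, `|f x - g x| <= (eps%:C)%C) ->
    A f }.

(** A point of the Gelfand dual of A is a character of A; we
    represent it by a functional on all of X -> Cx that is zero outside A
    (so that characters of A are represented uniquely). *)
Definition character (X : Type) (A : set (X -> Cx)) (phi : (X -> Cx) -> Cx) : Prop :=
  [/\ (forall f, ~ A f -> phi f = 0),
      phi (fun _ => 1) = 1,
      (forall f g, A f -> A g -> phi (fun x => f x + g x) = phi f + phi g),
      (forall f g, A f -> A g -> phi (fun x => f x * g x) = phi f * phi g) &
      (forall (c : Cx) f, A f -> phi (fun x => c * f x) = c * phi f)].

Definition compactif (X : Type) (A : set (X -> Cx)) : set ((X -> Cx) -> Cx) :=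
  character A.

(** boundary Y = Gelfand dual of A / l^infty(B) = characters vanishing on l^infty(B) *)
Definition boundary (X : Type) (B : set (set X)) (A : set (X -> Cx))
  : set ((X -> Cx) -> Cx) :=
  fun phi => character A phi /\ forall f, linf0 B f -> phi f = 0.

Definition pmap (X : Type) (A : set (X -> Cx)) (x : X) : (X -> Cx) -> Cx :=
  fun f => if pselect (A f) then f x else 0.

Definition wopen (X : Type) (A : set (X -> Cx)) (O : set ((X -> Cx) -> Cx)) : Prop :=
  O `<=` compactif A /\
  forall phi, O phi -> exists (fs : seq (X -> Cx)) (eps : Rr),
    [/\ 0 < eps, (forall f, List.In f fs -> A f) &
      forall psi, compactif A psi ->
        (forall f, List.In f fs -> `|psi f - phi f| < (eps%:C)%C) -> O psi].

Definition wopen2 (X : Type) (A : set (X -> Cx))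
  (O : set (((X -> Cx) -> Cx) * ((X -> Cx) -> Cx))) : Prop :=
  O `<=` compactif A `*` compactif A /\
  forall a b, O (a, b) -> exists O1 O2,
    [/\ wopen A O1, wopen A O2, O1 a, O2 b &
      forall c d, O1 c -> O2 d -> O (c, d)].

Definition nbhd_of (X : Type) (A : set (X -> Cx)) (Y U : set ((X -> Cx) -> Cx)) : Prop :=
  U `<=` compactif A /\ exists O, [/\ wopen A O, Y `<=` O & O `<=` U].

(** r : U -> Y is a retraction (continuous, identity on Y); topologies on U and
    Y are the subspace topologies of bar X. *)
Definition retraction (X : Type) (A : set (X -> Cx)) (Y U : set ((X -> Cx) -> Cx))
  (r : ((X -> Cx) -> Cx) -> ((X -> Cx) -> Cx)) : Prop :=
  [/\ forall u, U u -> Y (r u),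
      forall y, Y y -> r y = y &
      forall O, wopen A O -> exists O', wopen A O' /\
        forall u, U u -> (O (r u) <-> O' u)].

Definition diag_nbhd (X : Type) (A : set (X -> Cx)) (Y : set ((X -> Cx) -> Cx))
  (V : set (((X -> Cx) -> Cx) * ((X -> Cx) -> Cx))) : Prop :=
  V `<=` Y `*` Y /\
  exists O, [/\ wopen2 A O, (forall y, Y y -> O (y, y)) &
    forall a b, Y a -> Y b -> O (a, b) -> V (a, b)].

Definition OY_point (X : Type) (Y : set ((X -> Cx) -> Cx)) (q : Rr * ((X -> Cx) -> Cx))
  : Prop := 0 <= q.1 /\ Y q.2.

Definition OY_ent (X : Type) (A : set (X -> Cx)) (Y : set ((X -> Cx) -> Cx))
  (W : set ((Rr * ((X -> Cx) -> Cx)) * (Rr * ((X -> Cx) -> Cx)))) : Prop :=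
  [/\ (forall a b, W (a, b) -> OY_point Y a /\ OY_point Y b),
      (exists K : Rr, forall a b, W (a, b) -> `|a.1 - b.1| <= K) &
      (forall V, diag_nbhd A Y V -> exists S : Rr, forall a b, W (a, b) ->
          S <= a.1 -> S <= b.1 -> V (a.2, b.2))].

Definition OY_bdd (X : Type) (Y : set ((X -> Cx) -> Cx))
  (S : set (Rr * ((X -> Cx) -> Cx))) : Prop :=
  S `<=` OY_point Y /\ exists R0 : Rr, forall q, S q -> q.1 <= R0.

Definition nonneg_fun (X : Type) (s : X -> Rr) : Prop := forall x, 0 <= s x.

Definition proper_fun (X : Type) (B : set (set X)) (s : X -> Rr) : Prop :=
  forall S : set Rr, S `<=` [set t | 0 <= t] -> (exists R0 : Rr, forall t, S t -> t <= R0) ->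
    B (s @^-1` S).

Definition bornological_fun (X : Type) (B : set (set X)) (s : X -> Rr) : Prop :=
  forall S, B S -> exists R0 : Rr, forall x, S x -> s x <= R0.

Definition controlled_fun (X : Type) (E : set (set (X * X))) (s : X -> Rr) : Prop :=
  forall U, E U -> exists K : Rr, forall x x', U (x, x') -> `|s x - s x'| <= K.

Definition psi_map (X : Type) (A : set (X -> Cx)) (U : set ((X -> Cx) -> Cx))
  (r : ((X -> Cx) -> Cx) -> ((X -> Cx) -> Cx)) (s : X -> Rr) (y0 : (X -> Cx) -> Cx)
  (x : X) : Rr * ((X -> Cx) -> Cx) :=
  (s x, if pselect (U (pmap A x)) then r (pmap A x) else y0).

(* Main.v *)
Require Import Defs.
From HB Require Import structures.
From mathcomp Require Import all_boot all_algebra.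
From mathcomp Require Import complex.
From mathcomp Require Import all_classical all_reals.
From mathcomp Require Import Rstruct.
Import order.Order.TTheory GRing.Theory Num.Theory.
Local Open Scope classical_set_scope.
Local Open Scope ring_scope.
From mathcomp.algebra_tactics Require Import ring lra.

Definition nc (z : Cx) : Rr := Normc.normc z.

Lemma ncE (z : Cx) : `|z| = ((nc z)%:C)%C. Proof. by []. Qed.
Lemma nc_ge0 (z : Cx) : 0 <= nc z. Proof. by case: z => a b; rewrite /nc /= sqrtr_ge0. Qed.
Lemma nc_add (x y : Cx) : nc (x + y) <= nc x + nc y. Proof. exact: le_normcD. Qed.
Lemma nc_mul (x y : Cx) : nc (x * y) = nc x * nc y. Proof. exact: Normc.normcM. Qed.
Lemma nc_opp (x : Cx) : nc (- x) = nc x. Proof. exact: normcN. Qed.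
Lemma nc_real (x : Rr) : nc (x%:C)%C = `|x|.
Proof. by rewrite /nc /= expr0n /= addr0 sqrtr_sqr. Qed.
Lemma nc_Re (z : Cx) : `|complex.Re z| <= nc z.
Proof. case: z => a b; rewrite /nc /= -sqrtr_sqr ler_wsqrtr // lerDl sqr_ge0 //. Qed.
Lemma nc_Im (z : Cx) : `|complex.Im z| <= nc z.
Proof. case: z => a b; rewrite /nc /= -sqrtr_sqr ler_wsqrtr // lerDr sqr_ge0 //. Qed.
Lemma nc_ReIm (z : Cx) : nc z <= `|complex.Re z| + `|complex.Im z|.
Proof.
case: z => a b; rewrite /nc /=.
have h : 0 <= `|a| + `|b| by rewrite addr_ge0.
have e : Num.sqrt ((`|a| + `|b|)^+2) = `|a| + `|b| by rewrite sqrtr_sqr ger0_norm.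
rewrite -e; apply: ler_wsqrtr.
rewrite sqrrD (real_normK (num_real a)) (real_normK (num_real b)).
rewrite -addrA lerD2l lerDr mulrn_wge0 // mulr_ge0 //.
Qed.
Lemma nc_le (z : Cx) (e : Rr) : (`|z| <= (e%:C)%C) = (nc z <= e).
Proof. by rewrite ncE lecR. Qed.
Lemma nc_lt (z : Cx) (e : Rr) : (`|z| < (e%:C)%C) = (nc z < e).
Proof. by rewrite ncE ltcR. Qed.
Lemma nc_eq0 (z : Cx) : nc z = 0 -> z = 0.
Proof. exact: Normc.eq0_normc. Qed.
Lemma nc0 : nc 0 = 0. Proof. exact: Normc.normc0. Qed.
Definition ulim (T : Type) (G : set_system T) (g : T -> Cx) (a : Cx) :=
  forall e : Rr, 0 < e -> G [set t | nc (g t - a) < e].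

Arguments ulim {T}.
Section Ulim.
Variables (T : Type) (G : set_system T).

Lemma ulim_const (FG : Filter G) (c : Cx) : ulim G (fun _ => c) c.
Proof. by move=> e e0; apply: filterE => t; rewrite subrr nc0. Qed.

Lemma ulim_unique (FG : ProperFilter G) g a b : ulim G g a -> ulim G g b -> a = b.
Proof.
move=> ha hb; apply/eqP; rewrite -subr_eq0; apply/eqP; apply: nc_eq0.
apply/eqP; rewrite eq_le nc_ge0 andbT; apply/ler_addgt0Pr => e e0.
rewrite add0r.
have e2 : 0 < e / 2 by rewrite divr_gt0.
have [t [h1 h2]] := filter_ex (filterI (ha _ e2) (hb _ e2)).
have -> : a - b = - (g t - a) + (g t - b) by rewrite opprB addrA subrK.
apply: le_trans (nc_add _ _) _; rewrite nc_opp.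
by rewrite [e]splitr ltW // ltrD.
Qed.

Lemma ulim_add (FG : Filter G) f g a b : ulim G f a -> ulim G g b ->
  ulim G (fun t => f t + g t) (a + b).
Proof.
move=> ha hb e e0; have e2 : 0 < e / 2 by rewrite divr_gt0.
apply: filterS2 (ha _ e2) (hb _ e2) => t h1 h2 /=.
have -> : f t + g t - (a + b) = (f t - a) + (g t - b) by rewrite opprD addrACA.
by apply: le_lt_trans (nc_add _ _) _; rewrite [e]splitr ltrD.
Qed.

Lemma ulim_mul (FG : Filter G) f g a b : ulim G f a -> ulim G g b ->
  ulim G (fun t => f t * g t) (a * b).
Proof.
move=> ha hb e e0.
set K := nc a + nc b + 1.
have K0 : 0 < K by rewrite /K ltr_wpDl // addr_ge0 // nc_ge0.
set d := Num.min 1 (e / 2 / K).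
have e2 : 0 < e / 2 by rewrite divr_gt0.
have d0 : 0 < d by rewrite lt_min ltr01 !divr_gt0.
have d1 : d <= 1 by rewrite ge_min lexx.
have dK : d * K < e.
  apply: (@le_lt_trans _ _ (e / 2)); last by rewrite ltr_pdivrMr // ltr_pMr // ltr1n.
  by rewrite -ler_pdivlMr // ge_min lexx orbT.
apply: filterS2 (ha _ d0) (hb _ d0) => t h1 h2 /=.
have -> : f t * g t - a * b = f t * (g t - b) + (f t - a) * b.
  by rewrite mulrBr mulrBl addrA subrK.
apply: le_lt_trans (nc_add _ _) _; rewrite !nc_mul.
apply: le_lt_trans dK.
have hf : nc (f t) <= nc a + 1.
  have -> : f t = (f t - a) + a by rewrite subrK.
  by apply: le_trans (nc_add _ _) _; rewrite addrC lerD2l ltW // (lt_le_trans h1).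
apply: (@le_trans _ _ ((nc a + 1) * d + d * nc b)); last first.
  by rewrite /K le_eqVlt; apply/orP; left; apply/eqP; ring.
apply: lerD.
  by apply: ler_pM => //; rewrite ?nc_ge0 ?ltW.
by apply: ler_wpM2r; rewrite ?nc_ge0 ?ltW.
Qed.
End Ulim.
Section UlimEx.
Variables (T : Type) (G : set_system T).

Lemma ulim_real_ex (UG : UltraFilter G) (g : T -> Rr) (M : Rr) :
  (forall t, `|g t| <= M) ->
  exists l : Rr, forall e, 0 < e -> G [set t | `|g t - l| < e].
Proof.
move=> hM.
set S := [set a : Rr | G [set t | a <= g t]].
have S0 : S (- M).
  by apply: filterE => t; have := hM t; rewrite ler_norml => /andP[].
have ub : ubound S M.
  move=> a Sa; have [t ht] := filter_ex Sa; apply: le_trans ht _.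
  by have := hM t; rewrite ler_norml => /andP[].
have hs : has_sup S by split; [exists (- M) | exists M].
exists (sup S) => e e0.
have G1 : G [set t | sup S - e < g t].
  have [a Sa ha] := sup_adherent e0 hs.
  by apply: filterS Sa => t /= h; apply: lt_le_trans h.
have G2 : G [set t | g t < sup S + e].
  have [h|h] := in_ultra_setVsetC [set t | sup S + e <= g t] UG.
    have := sup_upper_bound hs h; lra.
  by apply: filterS h => t /= h'; rewrite ltNge; apply/negP.
apply: filterS2 G1 G2 => t /= h1 h2; rewrite ltr_norml; apply/andP; split; lra.
Qed.

Lemma ulim_ex (UG : UltraFilter G) (g : T -> Cx) (M : Rr) :
  (forall t, nc (g t) <= M) -> exists l : Cx, ulim G g l.
Proof.
move=> hM.
have [lr hr] := @ulim_real_ex UG (fun t => complex.Re (g t)) M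
  (fun t => le_trans (nc_Re _) (hM t)).
have [li hi] := @ulim_real_ex UG (fun t => complex.Im (g t)) M
  (fun t => le_trans (nc_Im _) (hM t)).
exists (lr +i* li)%C => e e0.
have e2 : 0 < e / 2 by rewrite divr_gt0.
apply: filterS2 (hr _ e2) (hi _ e2) => t /= h1 h2.
apply: le_lt_trans (nc_ReIm _) _.
have -> : complex.Re (g t - (lr +i* li)%C) = complex.Re (g t) - lr by case: (g t).
have -> : complex.Im (g t - (lr +i* li)%C) = complex.Im (g t) - li by case: (g t).
by rewrite [e]splitr ltrD.
Qed.
End UlimEx.
Section Chars.
Variables (X : Type) (E : set (set (X * X))) (B : set (set X)) (A : set (X -> Cx)).
Hypothesis HA : higson_dominated_alg E B A.

Lemma pmapE (x : X) f : A f -> Defs.pmap A x f = f x.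
Proof. by rewrite /Defs.pmap; case: pselect. Qed.
Lemma pmapN (x : X) f : ~ A f -> Defs.pmap A x f = 0.
Proof. by rewrite /Defs.pmap; case: pselect. Qed.

Lemma pmap_char (x : X) : character A (Defs.pmap A x).
Proof.
split.
- by move=> f; exact: pmapN.
- by have := hd_unit HA => h; rewrite pmapE.
- by move=> f g hf hg; have := hd_add HA hf hg => h; rewrite !pmapE.
- by move=> f g hf hg; have := hd_mul HA hf hg => h; rewrite !pmapE.
- by move=> c f hf; have := hd_scale HA c hf => h; rewrite !pmapE.
Qed.

Lemma A_bounded f : A f -> exists M : Rr, forall x, nc (f x) <= M.
Proof.
move=> /(hd_upper HA) [[M hM] _]; exists M => x. rewrite -nc_le. exact: hM.
Qed.

Variables (T : Type) (G : set_system T).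
Hypothesis UG : UltraFilter G.

Lemma char_ex (h : T -> X) : exists phi, character A phi /\
  forall f, A f -> ulim G (fun t => f (h t)) (phi f).
Proof.
have : forall f : X -> Cx, exists l : Cx,
    (A f -> ulim G (fun t => f (h t)) l) /\ (~ A f -> l = 0).
  move=> f; case: (pselect (A f)) => Af; last by exists 0.
  have [M hM] := A_bounded f Af.
  have [l hl] := @ulim_ex T G UG (fun t => f (h t)) M (fun t => hM (h t)).
  by exists l.
move=> /choice [phi hphi]; exists phi; split; last by move=> f /(proj1 (hphi f)).
have PG : Filter G by exact: ultra_proper.
have hlim f : A f -> ulim G (fun t => f (h t)) (phi f) by move/(proj1 (hphi f)).
split.
- by move=> f /(proj2 (hphi f)).
- apply: (@ulim_unique _ G _ (fun _ => 1)); first by have := hlim _ (hd_unit HA).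
  exact: (@ulim_const T G PG).
- move=> f g hf hg; apply: (@ulim_unique _ G _ (fun t => f (h t) + g (h t))).
    by have := hlim _ (hd_add HA hf hg).
  by have := @ulim_add T G PG _ _ _ _ (hlim _ hf) (hlim _ hg).
- move=> f g hf hg; apply: (@ulim_unique _ G _ (fun t => f (h t) * g (h t))).
    by have := hlim _ (hd_mul HA hf hg).
  by have := @ulim_mul T G PG _ _ _ _ (hlim _ hf) (hlim _ hg).
- move=> c f hf; apply: (@ulim_unique _ G _ (fun t => c * f (h t))).
    by have := hlim _ (hd_scale HA c hf).
  by have := @ulim_mul T G PG _ _ _ _ (@ulim_const T G PG c) (hlim _ hf).
Qed.

Lemma filter_list (FG : Filter G) (P : (X -> Cx) -> set T) (fs : seq (X -> Cx)) :
  (forall f, List.In f fs -> G (P f)) -> G [set t | forall f, List.In f fs -> P f t].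
Proof.
elim: fs => [|f fs IH] H; first by apply: filterE => t f [].
have := filterI (H f (or_introl erefl)) (IH (fun g hg => H g (or_intror hg))).
move=> /(_ FG) hI; apply: (@filterS T G FG _ _ _ hI) => t [h1 h2] g /= [<-|hg] //.
exact: h2.
Qed.

Lemma near_wopen (h : T -> X) phi (O : set ((X -> Cx) -> Cx)) :
  (forall f, A f -> ulim G (fun t => f (h t)) (phi f)) ->
  wopen A O -> O phi -> G [set t | O (Defs.pmap A (h t))].
Proof.
move=> hl [_ hO] Ophi; have [fs [eps [eps0 Afs hfs]]] := hO _ Ophi.
have PG : Filter G by exact: ultra_proper.
have := @filter_list PG (fun f t => nc (f (h t) - phi f) < eps) fs
  (fun f hf => hl f (Afs f hf) _ eps0).
move=> hI; apply: (@filterS T G PG _ _ _ hI) => t ht; apply: hfs; first exact: pmap_char.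
by move=> f hf; rewrite pmapE ?nc_lt; [exact: ht | exact: Afs].
Qed.
End Chars.
Theorem lemma3p21 (X : Type) (E : set (set (X * X))) (B : set (set X))
  (A : set (X -> Cx)) (U : set ((X -> Cx) -> Cx))
  (r : ((X -> Cx) -> Cx) -> ((X -> Cx) -> Cx)) (s : X -> Rr)
  (y0 : (X -> Cx) -> Cx) :
  bornological_coarse E B ->
  higson_dominated_alg E B A ->
  nbhd_of A (boundary B A) U ->
  retraction A (boundary B A) U r ->
  nonneg_fun s -> proper_fun B s -> bornological_fun B s -> controlled_fun E s ->
  boundary B A y0 ->
  bc_morphism E B (OY_ent A (boundary B A)) (OY_bdd (boundary B A))
    (psi_map A U r s y0).
Proof.
move=> HBC HA [HUsub [OU [wOU YOU OUU]]] [rY rid rcont] Hs0 Hsp Hsb Hsc Hy0.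
set Y := boundary B A.
set psi := psi_map A U r s y0.
have psiY : forall x, Y (psi x).2.
  move=> x; rewrite /psi /psi_map /=; case: pselect => // hU; exact: rY.
have psiU : forall x, U (Defs.pmap A x) -> (psi x).2 = r (Defs.pmap A x).
  by move=> x hU; rewrite /psi /psi_map /=; case: pselect.
split; last first.
  move=> S [SY [R0 hR0]].
  have hB := Hsp [set t | 0 <= t /\ t <= R0] (fun t h => proj1 h)
    (ex_intro _ R0 (fun t h => proj2 h)).
  apply: (bo_sub (bc_born HBC) hB) => x /= Sx; split; first exact: Hs0.
  exact: (hR0 _ Sx).
move=> W EW; split.
- move=> a b [xx [Wxx [-> ->]]]; split; split; try exact: Hs0; exact: psiY.
- have [K hK] := Hsc W EW; exists K => a b [[x x'] [Wxx [-> ->]]]; exact: hK.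
move=> V [VY [O [wO2 Odiag OV]]].
apply: contrapT => hneg.
pose Bad := fun S0 : Rr => [set xx : X * X | W xx /\ S0 <= s xx.1 /\ S0 <= s xx.2 /\
  ~ V ((psi xx.1).2, (psi xx.2).2)].
have hbad : forall S0 : Rr, Bad S0 !=set0.
  move=> S0; apply: contrapT => hn; apply: hneg; exists S0 => a b [xx [Wxx [-> ->]]] h1 h2.
  by apply: contrapT => hV; apply: hn; exists xx.
have PF0 : ProperFilter (filter_from setT Bad).
  apply: filter_from_proper; last by move=> i _; exact: hbad.
  apply: filter_fromT_filter; first by exists 0.
  move=> i j; exists (Num.max i j) => xx [h1 [h2 [h3 h4]]].
  have hi : i <= Num.max i j by rewrite le_max lexx.
  have hj : j <= Num.max i j by rewrite le_max lexx orbT.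
  split; (split; [done | split; [apply: le_trans _ h2 | split; [apply: le_trans _ h3 | done]]]) => //.
have [G [UG F0G]] := ultraFilterLemma PF0.
have PG : ProperFilter G by exact: ultra_proper.
have GB i : G (Bad i) by apply: F0G; exists i.
have Gfar : forall S, B S -> G [set xx | ~ S xx.1 /\ ~ S xx.2].
  move=> S BS; have [R0 hR0] := Hsb S BS.
  apply: filterS (GB (R0 + 1)) => xx [_ [h1 [h2 _]]].
  by split => hS; have := hR0 _ hS; lra.
have [phi1 [c1 l1]] := @char_ex X E B A HA _ G UG fst.
have [phi2 [c2 l2]] := @char_ex X E B A HA _ G UG snd.
have Y1 : Y phi1.
  split => // f hf.
  have Af := hd_lower HA hf.
  apply: (@ulim_unique _ G PG (fun t => f t.1)); first exact: l1.
  move=> e e0; have [_ hf0] := hf.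
  have e2 : 0 < e / 2 by rewrite divr_gt0.
  have [S [BS hS]] := hf0 _ e2.
  apply: filterS (Gfar S BS) => xx [h1 _] /=; rewrite subr0.
  have := hS _ h1; rewrite nc_le => h.
  apply: le_lt_trans h _; rewrite ltr_pdivrMr // ltr_pMr // ltr1n //.
have e12 : phi1 = phi2.
  apply: funext => f; case: (pselect (A f)) => Af; last first.
    by case: c1 => z1 _ _ _ _; case: c2 => z2 _ _ _ _; rewrite z1 // z2.
  apply: (@ulim_unique _ G PG (fun t => f t.1)); first exact: l1.
  have hd : ulim G (fun t => f t.1 - f t.2) 0.
    move=> e e0; have [_ hv] := hd_upper HA Af.
    have e2 : 0 < e / 2 by rewrite divr_gt0.
    have [S [BS hS]] := hv W EW _ e2.
    apply: filterS2 (Gfar S BS) (GB 0) => -[x x'] [n1 n2] [Wxx _] /=; rewrite subr0.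
    have := hS _ _ Wxx n1 n2; rewrite nc_le => h.
    apply: le_lt_trans h _; rewrite ltr_pdivrMr // ltr_pMr // ltr1n //.
  have := @ulim_add _ G PG _ _ _ _ (l2 _ Af) hd; rewrite addr0.
  have -> : (fun t => f t.2 + (f t.1 - f t.2)) = (fun t => f t.1) by
    apply: funext => t; rewrite addrC subrK.
  by [].
have Uphi : U phi1 by apply: OUU; exact: YOU.
have Gu1 := @near_wopen X E B A HA _ G UG _ _ _ l1 wOU (YOU _ Y1).
have Gu2 : G [set t | OU (Defs.pmap A t.2)].
  by apply: (@near_wopen X E B A HA _ G UG _ _ _ l2 wOU); rewrite -e12; exact: YOU.
have [O1 [O2 [wO1 wO2' O1p O2p O12]]] := (proj2 wO2) _ _ (Odiag _ Y1).
have [O1' [wO1' hO1']] := rcont O1 wO1.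
have [O2' [wO2'' hO2']] := rcont O2 wO2'.
have O1'p : O1' phi1 by apply/(hO1' _ Uphi); rewrite rid.
have O2'p : O2' phi2 by rewrite -e12; apply/(hO2' _ Uphi); rewrite rid.
have G1 := @near_wopen X E B A HA _ G UG _ _ _ l1 wO1' O1'p.
have G2 := @near_wopen X E B A HA _ G UG _ _ _ l2 wO2'' O2'p.
have [[x x'] [[[u1 u2] [g1 g2]] [_ [_ [_ nV]]]]] :=
  filter_ex (filterI (filterI (filterI Gu1 Gu2) (filterI G1 G2)) (GB 0)).
apply: nV; change (V ((psi x).2, (psi x').2)).
have hU1 : U (Defs.pmap A x) by exact: OUU.
have hU2 : U (Defs.pmap A x') by exact: OUU.
rewrite (psiU _ hU1) (psiU _ hU2).
apply: OV; [exact: rY | exact: rY |].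
apply: O12; [exact/(hO1' _ hU1) | exact/(hO2' _ hU2)].
Qed.
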